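(* Let $K=[k_1,\dots,k_m]\subseteq\{1,\dots,n\}$ be an interval of $m$ consecutive integers $k_1<\dots<k_m$, and let $\delta_K=\prod_{1\le i<j\le m}\big(1-\frac{x_{k_i}}{x_{k_j}}\big)\prod_{1\le r<s\le m}\big(1-\frac{1}{x_{k_r}x_{k_s}}\big)$. Then for every $\alpha\in\mathbb Z^m$, $$\mathrm H_G\big(\delta_K\,x_{k_1}^{\alpha_1}\cdots x_{k_m}^{\alpha_m}\big)=u^G_\alpha .$$
   Context: $G\in\{Sp_{2n},SO_{2n},SO_{2n+1}\}$; $h^G_k$ ($k\in\mathbb Z$) are elements of the ring $\Lambda$ of symmetric functions with $h^G_k=s^G_{(k)}$ (Koike–Terada universal character) for $k\ge0$ and $h^G_k=0$ for $k<0$. $\mathrm H_G$ is the $\mathbb Z$-linear map from the Laurent polynomial ring $\mathbb Z[x_1^{\pm1},\dots,x_n^{\pm1}]$ to $\Lambda$ sending $x^\beta=x_1^{\beta_1}\cdots x_n^{\beta_n}$ to $h^G_{\beta_1}h^G_{\beta_2}\cdots h^G_{\beta_n}$ (it is not a ring homomorphism). For $\alpha\in\mathbb Z^m$, $u^G_\alpha$ is the $m\times m$ determinant whose $(i,1)$ entry is $h^G_{\alpha_i-i+1}$ and whose $(i,j)$ entry for $2\le j\le m$ is $h^G_{\alpha_i-i+j}+h^G_{\alpha_i-i-j+2}$. *)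

(* Defs.v *)
From HB Require Import structures.
From mathcomp Require Import all_boot all_order all_algebra.
From mathcomp Require Import finmap.
From mathcomp.multinomials Require Import monalg freeg.

Set Implicit Arguments.
Unset Strict Implicit.
Unset Printing Implicit Defensive.

Import GRing.Theory.
Local Open Scope ring_scope.

(* The ring of symmetric functions, in Macdonald's presentation         *)
(*   Lambda = Z[h_1, h_2, ...]  (h_r algebraically independent),        *)
(* realised as the integral monoid algebra of commutative monomials in  *)
(* countably many indeterminates y_0, y_1, ...; y_r stands for h_{r+1}. *)
Definition Lam : Type := {malg int[{cmonom nat}]}.

Definition hsym (k : int) : Lam :=
  match k with
  | Posz 0 => 1
  | Posz k'.+1 => mkmalgU (ucm k') 1
  | Negz _ => 0
  end.

Inductive grp := Sp | SOeven | SOodd.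
(* Sp   : Sp_{2n},  SOeven : SO_{2n},  SOodd : SO_{2n+1} *)

(* Koike--Terada universal characters of one-row shapes (k), k >= 0:
   sp_(k) = h_k   (from sp_lambda = det(h_{l_i-i+j} + h_{l_i-i-j+2}) with
                   first column h_{l_i-i+1}),
   o_(k)  = h_k - h_{k-2}  (from o_lambda = det(h_{l_i-i+j} - h_{l_i-i-j})). *)
Definition sG1 (G : grp) (k : nat) : Lam :=
  match G with
  | Sp => hsym k%:Z
  | SOeven | SOodd => hsym k%:Z - hsym (k%:Z - 2)
  end.

Definition hG (G : grp) (k : int) : Lam :=
  match k with
  | Posz k' => sG1 G k'
  | Negz _ => 0
  end.

(* Laurent polynomials Z[x_1^{+-1},...,x_n^{+-1}]: the free Z-module on  *)
(* the exponent vectors beta in Z^n (monomial x^beta), with the         *)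
(* multiplication x^beta * x^gamma = x^(beta+gamma) extended bilinearly. *)
Notation expo n := {ffun 'I_n -> int}.
Definition LP (n : nat) := {freeg (expo n) / int}.

Definition LPmono n (beta : expo n) : LP n := Freeg [:: ((1 : int), beta)].
Definition LPone n : LP n := LPmono ([ffun=> 0%R] : expo n).
Definition LPmul n (p q : LP n) : LP n :=
  \sum_(b <- dom p) \sum_(c <- dom q)
     Freeg [:: ((coeff b p * coeff c q : int), (b + c : expo n))].

Definition xpow n (j : 'I_n) (e : int) : LP n :=
  LPmono [ffun l => if l == j then e else 0].

Definition HG (G : grp) n (p : LP n) : Lam :=
  fglift (fun beta : expo n => \prod_(l < n) hG G (beta l)) p.

Definition deltaK n m (k : 'I_m -> 'I_n) : LP n :=
  LPmul
   (\big[@LPmul n/LPone n]_(i < m) \big[@LPmul n/LPone n]_(j < m | (i < j)%N)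
       (LPone n - LPmul (xpow (k i) 1) (xpow (k j) (-1))))
   (\big[@LPmul n/LPone n]_(r < m) \big[@LPmul n/LPone n]_(s < m | (r < s)%N)
       (LPone n - LPmul (xpow (k r) (-1)) (xpow (k s) (-1)))).

Definition xK n m (k : 'I_m -> 'I_n) (alpha : 'I_m -> int) : LP n :=
  \big[@LPmul n/LPone n]_(i < m) xpow (k i) (alpha i).

Definition uG (G : grp) m (alpha : 'I_m -> int) : Lam :=
  \det (\matrix_(i' < m, j' < m)
     let i : int := (i'.+1)%:Z in
     let j : int := (j'.+1)%:Z in
     if j' == 0%N :> nat then hG G (alpha i' - i + 1)
     else hG G (alpha i' - i + j) + hG G (alpha i' - i - j + 2)).

(* Main.v *)
Require Import Defs.
From HB Require Import structures.
From mathcomp Require Import all_boot all_order all_algebra.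
From mathcomp.multinomials Require Import monalg freeg.
From mathcomp Require Import ring.
Local Open Scope ring_scope.
Import GRing.Theory.

Section LPRing.
Variable n : nat.
Implicit Types (p q r : LP n) (b c : expo n).

Definition Ew (w : expo n -> int) p : int := fglift (fun y => (w y : int^o)) p.

Lemma fglift_add (M : lmodType int) (f : expo n -> M) p q :
  fglift f (p + q) = fglift f p + fglift f q.
Proof.
have := lift_is_additive f p (- q); rewrite opprK => ->.
have := lift_is_additive f 0 q; rewrite sub0r => ->.
have := lift_is_additive f 0 0; rewrite subr0 subrr => ->.
by rewrite sub0r opprK.
Qed.

Lemma fglift_sum (M : lmodType int) (f : expo n -> M) (I : Type) (s : seq I) (P : pred I) (F : I -> LP n) :
  fglift f (\sum_(i <- s | P i) F i) = \sum_(i <- s | P i) fglift f (F i).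
Proof.
elim/big_rec2: _ => [|i x y _ <-]; last by rewrite fglift_add.
have := lift_is_additive f 0 0; by rewrite subrr => ->; rewrite subrr.
Qed.

Lemma fglift1 (M : lmodType int) (f : expo n -> M) k b :
  fglift f (Freeg [:: (k, b)]) = k *: f b.
Proof. by rewrite fglift_Freeg prelift_seq1. Qed.

Lemma EwE w p : Ew w p = \sum_(b <- dom p) coeff b p * w b.
Proof.
rewrite /Ew -{1}(freeg_sumE p) fglift_sum; apply: eq_bigr => b _.
by rewrite fglift1.
Qed.

Lemma Ew_add w p q : Ew w (p + q) = Ew w p + Ew w q.
Proof. exact: (@fglift_add (GRing.regular int) (fun y => (w y : int^o))). Qed.

Lemma Ew_mul w p q : Ew w (LPmul p q) =
  \sum_(b <- dom p) \sum_(c <- dom q) coeff b p * coeff c q * w (b + c).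
Proof.
rewrite /Ew /LPmul fglift_sum; apply: eq_bigr => b _.
rewrite fglift_sum; apply: eq_bigr => c _; by rewrite fglift1.
Qed.

Lemma Ew_mulL w p q : Ew w (LPmul p q) =
  \sum_(b <- dom p) coeff b p * Ew (fun c => w (b + c)) q.
Proof.
rewrite Ew_mul; apply: eq_bigr => b _; rewrite EwE big_distrr; apply: eq_bigr => c _. idtac.
by rewrite /= mulrA.
Qed.

Lemma Ew_mulR w p q : Ew w (LPmul p q) =
  \sum_(c <- dom q) coeff c q * Ew (fun b => w (b + c)) p.
Proof.
rewrite Ew_mul exchange_big; apply: eq_bigr => c _; rewrite EwE big_distrr; apply: eq_bigr => b _.
by rewrite /= mulrCA mulrA.
Qed.

Lemma Ew_ext p q : (forall w, Ew w p = Ew w q) -> p = q.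
Proof.
move=> H; apply/eqP/freeg_eqP => x.
by have := H (fun y => (y == x)%:R).
Qed.

Lemma dom_mono b : dom (LPmono b) = [:: b].
Proof. by rewrite /LPmono domU. Qed.

Lemma coeff_mono b : coeff b (LPmono b) = 1.
Proof. by rewrite /LPmono coeffU eqxx mulr1. Qed.

Lemma Ew_mono w b : Ew w (LPmono b) = w b.
Proof. by rewrite /Ew fglift1 scale1r. Qed.

Lemma LPmulA : associative (@LPmul n).
Proof.
move=> p q r; apply: Ew_ext => w.
rewrite Ew_mulL Ew_mulR.
under eq_bigr do rewrite Ew_mulR big_distrr.
under [RHS]eq_bigr do rewrite Ew_mulL big_distrr.
rewrite exchange_big; apply: eq_bigr => b _; apply: eq_bigr => c _.
rewrite /= !mulrA [coeff _ r * _]mulrC !EwE; congr (_ * _).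
by apply: eq_bigr => d _; rewrite addrA addrAC.
Qed.

Lemma LPmulC : commutative (@LPmul n).
Proof.
move=> p q; apply: Ew_ext => w; rewrite !Ew_mul exchange_big.
apply: eq_bigr => b _; apply: eq_bigr => c _. by rewrite [coeff b q * _]mulrC addrC.
Qed.

Lemma LPmul1 : left_id (LPone n) (@LPmul n).
Proof.
move=> p; apply: Ew_ext => w; rewrite Ew_mulL /LPone dom_mono big_seq1 coeff_mono mul1r.
rewrite !EwE; apply: eq_bigr => b _; by rewrite add0r.
Qed.

Lemma LPmulDl : left_distributive (@LPmul n) +%R.
Proof.
move=> p q r; apply: Ew_ext => w; rewrite Ew_add !Ew_mulR -big_split /=.
by apply: eq_bigr => c _; rewrite Ew_add mulrDr.
Qed.

Lemma LPone_neq0 : LPone n != 0.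
Proof.
apply/eqP => /(congr1 (coeff [ffun=> 0])); rewrite coeff0 /LPone coeff_mono.
by [].
Qed.

End LPRing.

HB.instance Definition _ n := GRing.Zmodule.on (LP n).
HB.instance Definition _ n := GRing.Zmodule_isComNzRing.Build (LP n)
  (@LPmulA n) (@LPmulC n) (@LPmul1 n) (@LPmulDl n) (@LPone_neq0 n).


Section Mono.
Variable n : nat.
Implicit Types (b c : expo n).

Lemma LPmono_mul b c : LPmono b * LPmono c = LPmono (b + c).
Proof.
apply: Ew_ext => w; rewrite [LHS]Ew_mulL dom_mono big_seq1 coeff_mono mul1r !Ew_mono.
by [].
Qed.

Lemma LPmono0 : LPmono (0 : expo n) = 1.
Proof. by rewrite /GRing.one /= /LPone; congr LPmono; apply/ffunP => l; rewrite !ffunE. Qed.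

Lemma xpowD (j : 'I_n) (a b : int) : xpow j (a + b) = xpow j a * xpow j b.
Proof.
rewrite /xpow LPmono_mul; congr LPmono; apply/ffunP => l; rewrite !ffunE.
by case: (l == j); rewrite ?addr0.
Qed.

Lemma xpow0 (j : 'I_n) : xpow j 0 = 1.
Proof.
rewrite /xpow -LPmono0; congr LPmono; apply/ffunP => l; rewrite !ffunE.
by case: (l == j).
Qed.

Lemma prod_xpow m (k : 'I_m -> 'I_n) (r : 'I_m -> int) :
  \prod_(i < m) xpow (k i) (r i) =
  LPmono (\sum_(i < m) [ffun l => if l == k i then r i else 0]).
Proof.
have Hm : {morph (@LPmono n) : x y / x + y >-> x * y} by move=> x y; rewrite LPmono_mul.
by rewrite (big_morph (@LPmono n) Hm LPmono0).
Qed.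

Variable G : grp.

Lemma HGD (p q : LP n) : HG G (p + q) = HG G p + HG G q.
Proof. exact: fglift_add. Qed.

Lemma HG0 : HG G (0 : LP n) = 0.
Proof. by have := HGD 0 0; rewrite addr0 -{1}[HG G 0]addr0 => /addrI/esym. Qed.

Lemma HGN (p : LP n) : HG G (- p) = - HG G p.
Proof. by apply/eqP; rewrite -subr_eq0 opprK -HGD addNr HG0. Qed.

Lemma HG_sum (I : Type) (s : seq I) (P : pred I) (F : I -> LP n) :
  HG G (\sum_(i <- s | P i) F i) = \sum_(i <- s | P i) HG G (F i).
Proof. by elim/big_rec2: _ => [|i x y _ <-]; rewrite ?HG0 ?HGD. Qed.

Lemma HG_mono b : HG G (LPmono b) = \prod_(l < n) hG G (b l).
Proof. by rewrite /HG fglift1 scale1r. Qed.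

Lemma hG0 : hG G 0 = 1.
Proof. by case: G => //=; rewrite subr0. Qed.

Lemma HG_prod_xpow m (k : 'I_m -> 'I_n) (r : 'I_m -> int) :
  injective k ->
  HG G (\prod_(i < m) xpow (k i) (r i)) = \prod_(i < m) hG G (r i).
Proof.
move=> kinj; rewrite prod_xpow HG_mono.
rewrite (bigID (fun l => l \in [set k i | i in 'I_m])) /=.
rewrite [X in _ * X]big1 ?mulr1; last first.
  move=> l /imsetP Hl; rewrite sum_ffunE big1 ?hG0 // => i _; rewrite ffunE.
  case: eqP => // Hli; by case: Hl; exists i.
rewrite big_imset /=; last by move=> x y _ _; apply: kinj.
apply: eq_bigr => i _; rewrite sum_ffunE (bigD1 i) //= ffunE eqxx big1 ?addr0 //.
move=> j /negbTE ji; rewrite ffunE; case: eqP => // /kinj ij.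
by rewrite ij eqxx in ji.
Qed.

End Mono.
Section Cheb.
Variable R : comNzRingType.

Fixpoint Tp (j : nat) : {poly R} * {poly R} :=
  match j with
  | 0 => (2%:P, 'X)
  | j'.+1 => let: (a, b) := Tp j' in (b, 'X * b - a)
  end.
Definition T j := (Tp j).1.

Lemma Tp2 j : (Tp j).2 = T j.+1.
Proof. by rewrite /T /=; case: (Tp j). Qed.

Lemma TSS j : T j.+2 = 'X * T j.+1 - T j.
Proof.
by rewrite /T /=; case: (Tp j).
Qed.

Lemma T0 : T 0 = 2%:P. Proof. by []. Qed.
Lemma T1 : T 1 = 'X. Proof. by []. Qed.

Lemma T_eval (x x' : R) j : x * x' = 1 -> (T j).[x + x'] = x ^+ j + x' ^+ j.
Proof.
move=> xx'.
suff: (T j).[x + x'] = x ^+ j + x' ^+ j /\ (T j.+1).[x + x'] = x ^+ j.+1 + x' ^+ j.+1 by case.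
elim: j => [|j [IH1 IH2]].
  by rewrite T0 T1 hornerC hornerX !expr0 !expr1.
split=> //; rewrite TSS hornerD hornerN hornerM hornerX IH1 IH2.
have E : x ^+ j = x ^+ j * (x * x') by rewrite xx' mulr1.
have E' : x' ^+ j = x' ^+ j * (x * x') by rewrite xx' mulr1.
rewrite {1}E {1}E' !exprS; ring.
Qed.

Lemma T_monic j : T j.+1 \is monic /\ size (T j.+1) = j.+2 /\ (size (T j) <= j.+1)%N.
Proof.
elim: j => [|j [m1 [s1 s0]]].
  by rewrite T1 T0 monicX size_polyX size_polyC_leq1.
have sX : size ('X * T j.+1) = j.+3.
  by rewrite mulrC size_mulX ?monic_neq0 // s1.
have lt : (size (- T j)%R < size ('X * T j.+1)%R)%N.
  by rewrite size_polyN sX; apply: leq_ltn_trans s0 _.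
rewrite TSS; split; last split.
- by rewrite monicE lead_coefDl // lead_coef_monicM ?monicX // -monicE.
- by rewrite size_polyDl.
- by rewrite s1.
Qed.

Definition Q j := if j is 0 then 1 else T j.

Lemma Q_size j : size (Q j) = j.+1.
Proof. by case: j => [|j]; rewrite /Q ?size_poly1 //; case: (T_monic j) => _ []. Qed.

Lemma Q_lead j : (Q j)`_j = 1.
Proof.
have -> : (Q j)`_j = lead_coef (Q j) by rewrite lead_coefE Q_size.
case: j => [|j]; first by rewrite /Q lead_coef1.
by case: (T_monic j) => /monicP.
Qed.

Lemma Q_high j l : (j < l)%N -> (Q j)`_l = 0.
Proof. by move=> jl; rewrite nth_default // Q_size. Qed.

End Cheb.

Section Laurent.
Variables (R : comNzRingType) (m : nat) (pw : 'I_m -> int -> R).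
Hypothesis pwD : forall i a b, pw i (a + b) = pw i a * pw i b.
Hypothesis pw0 : forall i, pw i 0 = 1.
Variable alpha : 'I_m -> int.

Lemma pw_nat i (e : nat) : pw i e%:Z = pw i 1 ^+ e.
Proof. by elim: e => [|e IH]; rewrite ?pw0 // intS pwD IH exprS. Qed.

Lemma pw_neg i (e : nat) : pw i (- e%:Z) = pw i (-1) ^+ e.
Proof. by elim: e => [|e IH]; rewrite ?oppr0 ?pw0 // intS opprD pwD IH exprS. Qed.

Lemma pw_inv i : pw i 1 * pw i (-1) = 1.
Proof. by rewrite -pwD addrN pw0. Qed.

Let y i := pw i 1 + pw i (-1).

Lemma fact_id (a a' b b' : R) : a * a' = 1 -> b * b' = 1 ->
  (b + b') - (a + a') = b * (1 - a * b') * (1 - a' * b').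
Proof.
move=> ha hb.
have E : b * (1 - a * b') * (1 - a' * b') - ((b + b') - (a + a')) =
  (b * b' - 1) * (b' - (a + a')) + (a * a' - 1) * (b * b') * b' by ring.
by apply/eqP; rewrite eq_sym -subr_eq0 E ha hb subrr !mul0r addr0.
Qed.

Theorem laurent_det :
  (\prod_(i < m) \prod_(j < m | (i < j)%N) (1 - pw i 1 * pw j (-1))) *
  (\prod_(r < m) \prod_(s < m | (r < s)%N) (1 - pw r (-1) * pw s (-1))) *
  \prod_(i < m) pw i (alpha i) =
  \det (\matrix_(i' < m, j' < m)
     let i : int := (i'.+1)%:Z in
     let j : int := (j'.+1)%:Z in
     if j' == 0%N :> nat then pw i' (alpha i' - i + 1)
     else pw i' (alpha i' - i + j) + pw i' (alpha i' - i - j + 2)).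
Proof.
set C := \matrix_(i < m, j < m) (Q R j).[y i].
set V := \matrix_(i < m, l < m) y i ^+ l.
set U := \matrix_(l < m, j < m) (Q R j)`_l.
have -> : (\matrix_(i' < m, j' < m)
     let i : int := (i'.+1)%:Z in
     let j : int := (j'.+1)%:Z in
     if j' == 0%N :> nat then pw i' (alpha i' - i + 1)
     else pw i' (alpha i' - i + j) + pw i' (alpha i' - i - j + 2)) =
   diag_mx (\row_i pw i (alpha i - (i : nat)%:Z)) *m C.
  apply/matrixP => i j; rewrite mul_diag_mx !mxE /=.
  case: j => [[|j] Hj] /=.
    rewrite /Q hornerC mulr1; congr (pw _ _).
    by rewrite intS; ring.
  rewrite /Q /y (@T_eval _ _ _ _ (pw_inv i)) -pw_nat -pw_neg mulrDr -!pwD.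
  by congr (_ + _); congr (pw _ _); rewrite !intS; ring.
have -> : C = V *m U.
  apply/matrixP => i j; rewrite !mxE (horner_coef_wide _ (leq_trans _ (ltn_ord j))) ?Q_size //.
  by apply: eq_bigr => l _; rewrite !mxE mulrC.
have dU : \det U = 1.
  rewrite -det_tr det_trig; last by apply/is_trig_mxP => i j ij; rewrite !mxE Q_high.
  by apply: big1 => i _; rewrite !mxE Q_lead.
have dV : \det V = \prod_(i < m) \prod_(j < m | (i < j)%N) (y j - y i).
  rewrite -det_tr (_ : V^T = Vandermonde m (\row_i y i)).
    rewrite det_Vandermonde; apply: eq_bigr => i _; apply: eq_bigr => j _.
    by rewrite !mxE.
  by apply/matrixP => i j; rewrite !mxE.
rewrite det_mulmx det_mulmx dU mulr1 dV det_diag.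
have -> : \prod_(i < m) \prod_(j < m | (i < j)%N) (y j - y i) =
  (\prod_(i < m) \prod_(j < m | (i < j)%N) pw j 1) *
  (\prod_(i < m) \prod_(j < m | (i < j)%N) (1 - pw i 1 * pw j (-1))) *
  (\prod_(r < m) \prod_(s < m | (r < s)%N) (1 - pw r (-1) * pw s (-1))).
  rewrite -!big_split /=; apply: eq_bigr => i _; rewrite -!big_split /=.
  by apply: eq_bigr => j _; rewrite /y fact_id ?pw_inv.
have -> : \prod_(i < m) \prod_(j < m | (i < j)%N) pw j 1 =
          \prod_(j < m) pw j 1 ^+ j.
  rewrite (exchange_big_dep xpredT) //=; apply: eq_bigr => j _.
  rewrite -(big_ord_widen m (fun _ => pw j 1)) ?(ltnW (ltn_ord j)) //.
  by rewrite prodr_const card_ord.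
have -> : \prod_(i < m) pw i (alpha i) =
  \prod_(i < m) (\row_i0 pw i0 (alpha i0 - (i0 : nat)%:Z)) 0 i * \prod_(j < m) pw j 1 ^+ j.
  rewrite -big_split /=; apply: eq_bigr => i _.
  by rewrite mxE -pw_nat -pwD subrK.
ring.
Qed.

End Laurent.

Section Final.
Variables (G : grp) (n m : nat) (k : 'I_m -> 'I_n).
Hypothesis kinj : injective k.

Lemma HG_prod_sel (b : 'I_m -> bool) (r : 'I_m -> int) :
  HG G (\prod_(i < m) (if b i then xpow (k i) (r i) else 0)) =
  \prod_(i < m) (if b i then hG G (r i) else 0).
Proof.
case: (boolP [forall i, b i]) => [/forallP H | /forallPn [i /negbTE Hi]].
  rewrite (eq_bigr (fun i => xpow (k i) (r i))) => [|i _]; last by rewrite H.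
  rewrite HG_prod_xpow //; apply: eq_bigr => i _; by rewrite H.
by rewrite (bigD1 i) //= Hi mul0r HG0 (bigD1 i) //= Hi mul0r.
Qed.

Lemma HG_prod_sum (b : 'I_m -> 'I_2 -> bool) (r : 'I_m -> 'I_2 -> int) :
  HG G (\prod_(i < m) \sum_(t < 2) (if b i t then xpow (k i) (r i t) else 0)) =
  \prod_(i < m) \sum_(t < 2) (if b i t then hG G (r i t) else 0).
Proof.
rewrite !bigA_distr_bigA HG_sum; apply: eq_bigr => f _; exact: HG_prod_sel.
Qed.

End Final.

Theorem mainTheorem8 (G : grp) (n m : nat) (a : nat) (k : 'I_m -> 'I_n)
  (hk : forall i : 'I_m, nat_of_ord (k i) = (a + i)%N)
  (alpha : 'I_m -> int) :
  HG G (LPmul (deltaK k) (xK k alpha)) = uG G alpha.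
Proof.
have kinj : injective k.
  by move=> i j /(congr1 (@nat_of_ord _)); rewrite !hk => /addnI /val_inj.
pose pw i e := xpow (k i) e.
have pwD : forall i a b, pw i (a + b) = pw i a * pw i b by move=> *; apply: xpowD.
have pw0 : forall i, pw i 0 = 1 by move=> *; apply: xpow0.
have L := @laurent_det _ _ pw pwD pw0 alpha.
transitivity (HG G (\det (\matrix_(i' < m, j' < m)
     let i : int := (i'.+1)%:Z in
     let j : int := (j'.+1)%:Z in
     if j' == 0%N :> nat then pw i' (alpha i' - i + 1)
     else pw i' (alpha i' - i + j) + pw i' (alpha i' - i - j + 2)))).
  by rewrite -L.
rewrite /uG /determinant HG_sum; apply: eq_bigr => s _ /=.
move: (perm.odd_perm s) (perm.fun_of_perm.body s) => sg sf.
set b : 'I_m -> 'I_2 -> bool := fun i t => (t == 0 :> nat) || (sf i != 0 :> nat).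
set r : 'I_m -> 'I_2 -> int := fun i t =>
  if sf i == 0 :> nat then alpha i - (i.+1)%:Z + 1
  else if t == 0 :> nat then alpha i - (i.+1)%:Z + (sf i).+1%:Z
  else alpha i - (i.+1)%:Z - (sf i).+1%:Z + 2.
have E1 : \prod_(i < m) (\matrix_(i' < m, j' < m)
     let i : int := (i'.+1)%:Z in
     let j : int := (j'.+1)%:Z in
     if j' == 0%N :> nat then pw i' (alpha i' - i + 1)
     else pw i' (alpha i' - i + j) + pw i' (alpha i' - i - j + 2)) i (sf i) =
   \prod_(i < m) \sum_(t < 2) (if b i t then xpow (k i) (r i t) else 0).
  apply: eq_bigr => i _; rewrite !big_ord_recl big_ord0 addr0 mxE /b /r /=.
  by case: (sf i == 0 :> nat); rewrite /= ?addr0.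
have E2 : \prod_(i < m) (\matrix_(i' < m, j' < m)
     let i : int := (i'.+1)%:Z in
     let j : int := (j'.+1)%:Z in
     if j' == 0%N :> nat then hG G (alpha i' - i + 1)
     else hG G (alpha i' - i + j) + hG G (alpha i' - i - j + 2)) i (sf i) =
   \prod_(i < m) \sum_(t < 2) (if b i t then hG G (r i t) else 0).
  apply: eq_bigr => i _; rewrite !big_ord_recl big_ord0 addr0 mxE /b /r /=.
  by case: (sf i == 0 :> nat); rewrite /= ?addr0.
rewrite E1 E2 -(@HG_prod_sum G _ _ k kinj).
by case: sg; rewrite /= ?expr0 ?expr1 ?mul1r ?mulN1r ?HGN.
Qed.
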